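(* Consider $N\ge2$ agents $x_i(k+1)=Ax_i(k)+Bu_i(k)$, $y_i(k)=Cx_i(k)$, $i=1,\dots,N$, where all eigenvalues of $A$ lie in the closed unit disc, $(A,B)$ is stabilizable and $(C,A)$ is detectable. Let $K$ be such that $A-BK$ is Schur stable and $H$ be such that $A-HC$ is Schur stable. Each agent $i$ uses the protocol $$\begin{aligned}\eta_i(k+1)&=A\eta_i(k)+Bu_i(k)+A\hat x_i(k)-A\hat\zeta_i(k),\\ \hat x_i(k+1)&=A\hat x_i(k)-BK\hat\zeta_i(k)+H(\zeta_i(k)-C\hat x_i(k)),\\ u_i(k)&=-K\eta_i(k),\end{aligned}$$ with $\zeta_i(k)=\sum_{j=1}^N d_{ij}(y_i(k)-y_j(k))$ and $\hat\zeta_i(k)=\sum_{j=1}^N d_{ij}(\eta_i(k)-\eta_j(k))$. Then for every $N$, every weighted directed graph on $N$ nodes containing a directed spanning tree, and all initial conditions, $\lim_{k\to\infty}(x_i(k)-x_j(k))=0$ for all $i,j$. In particular, the scalable state synchronization problem with localized information exchange (partial-state coupling) is solvable by a protocol designed using only $(C,A,B)$.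
   Context: The network is a weighted directed graph with adjacency matrix $[a_{ij}]$, $a_{ij}\ge0$, $a_{ii}=0$ ($a_{ij}>0$ means an edge from $j$ to $i$); weighted in-degree $d_{in}(i)=\sum_j a_{ij}$. The row stochastic matrix $D=[d_{ij}]$ is given by $d_{ij}=a_{ij}/(1+d_{in}(i))$ for $j\ne i$ and $d_{ii}=1/(1+d_{in}(i))$, so $\zeta_i=\frac{1}{1+d_{in}(i)}\sum_j a_{ij}(y_i-y_j)$. Schur stable means all eigenvalues in the open unit disc. A directed spanning tree is a subgraph containing all nodes in which every node except one root has exactly one parent. *)

(* Defs.v *)
From HB Require Import structures.
From mathcomp Require Import all_boot all_order all_algebra.
From mathcomp Require Import complex.
From mathcomp Require Import all_classical all_reals all_analysis.
Set Implicit Arguments. Unset Strict Implicit. Unset Printing Implicit Defensive.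
Import Order.TTheory GRing.Theory Num.Theory.
Local Open Scope ring_scope.
Local Open Scope complex_scope.

Definition cmx (R : rcfType) (n : nat) (M : 'M[R]_n) : 'M[R[i]]_n :=
  map_mx (fun x : R => x%:C) M.

Definition schur_stable (R : rcfType) (n : nat) (M : 'M[R]_n) : Prop :=
  forall l : R[i], eigenvalue (cmx M) l -> `|l| < 1.

Definition eigs_in_closed_unit_disc (R : rcfType) (n : nat) (M : 'M[R]_n) : Prop :=
  forall l : R[i], eigenvalue (cmx M) l -> `|l| <= 1.

Definition stabilizable (R : rcfType) (n m : nat) (A : 'M[R]_n) (B : 'M[R]_(n, m)) : Prop :=
  exists F : 'M[R]_(m, n), schur_stable (A + B *m F).

Definition detectable (R : rcfType) (n p : nat) (C : 'M[R]_(p, n)) (A : 'M[R]_n) : Prop :=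
  exists L : 'M[R]_(n, p), schur_stable (A + L *m C).

(* Weighted digraph adjacency: a i j >= 0, a i i = 0; a i j > 0 is an edge j -> i. *)
Definition adjacency (R : numDomainType) (N : nat) (a : 'M[R]_N) : Prop :=
  (forall i j, 0 <= a i j) /\ (forall i, a i i = 0).

(* Contains a directed spanning tree: a root r and a parent map par such that
   every non-root node i has the edge par i -> i (a i (par i) > 0), and
   following parents from any node reaches the root (no cycles). *)
Definition has_spanning_tree (R : numDomainType) (N : nat) (a : 'M[R]_N) : Prop :=
  exists (r : 'I_N) (par : 'I_N -> 'I_N),
    (forall i, i != r -> 0 < a i (par i)) /\
    (forall i, exists k : nat, iter k par i = r).

Definition din (R : ringType) (N : nat) (a : 'M[R]_N) (i : 'I_N) : R :=
  \sum_(j < N) a i j.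

Definition Dmat (R : fieldType) (N : nat) (a : 'M[R]_N) : 'M[R]_N :=
  \matrix_(i, j) (if i == j then (1 + din a i)^-1 else a i j / (1 + din a i)).

(* Main.v *)
Require Import Defs.
From HB Require Import structures.
From mathcomp Require Import all_boot all_order all_algebra.
From mathcomp Require Import complex.
From mathcomp Require Import all_classical all_reals all_analysis.
From mathcomp Require Import ring lra.
Import Order.TTheory GRing.Theory Num.Theory.
Import numFieldNormedType.Exports.
Set Implicit Arguments. Unset Strict Implicit. Unset Printing Implicit Defensive.
Local Open Scope ring_scope.
Local Open Scope complex_scope.
Local Open Scope classical_set_scope.

Section S1.
Variable R : realType.
Local Notation C := (R[i]).
Definition nm (z : C) : R := Normc.normc z.
Lemma nm_ge0 z : 0 <= nm z.
Proof. by case: z => a b; rewrite /nm /= sqrtr_ge0. Qed.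
Lemma nmD x y : nm (x + y) <= nm x + nm y.
Proof. exact: le_normcD. Qed.
Lemma nmM x y : nm (x * y) = nm x * nm y.
Proof. exact: Normc.normcM. Qed.
Lemma nmN x : nm (- x) = nm x.
Proof. exact: normcN. Qed.
Lemma nm0 : nm 0 = 0.
Proof. exact: Normc.normc0. Qed.
Lemma nmR (x : R) : nm x%:C = `|x|.
Proof. by rewrite /nm /= expr0n /= addr0 sqrtr_sqr. Qed.
Lemma normC_nm (z : C) : `|z| = (nm z)%:C.
Proof. by []. Qed.
Lemma nm_eq0 z : nm z = 0 -> z = 0.
Proof. exact: Normc.eq0_normc. Qed.
Lemma nmB x y : nm (x - y) <= nm x + nm y.
Proof. by rewrite -(nmN y) nmD. Qed.
End S1.

Section S2.
Variable R : realType.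
Local Notation C := (R[i]).
Definition t0 (u : nat -> C) := forall e : R, 0 < e ->
  exists K, forall k, (K <= k)%N -> nm (u k) < e.

Lemma t0_0 : t0 (fun=> 0).
Proof. by move=> e e0; exists 0%N => k _; rewrite nm0. Qed.

Lemma t0_ext u w : (forall k, u k = w k) -> t0 w -> t0 u.
Proof. by move=> E h e /h [K HK]; exists K => k /HK; rewrite E. Qed.

Lemma t0D u w : t0 u -> t0 w -> t0 (fun k => u k + w k).
Proof.
move=> hu hw e e0; have e2 : 0 < e / 2 by rewrite divr_gt0.
have [K1 H1] := hu _ e2; have [K2 H2] := hw _ e2.
exists (maxn K1 K2) => k; rewrite geq_max => /andP[k1 k2].
apply: le_lt_trans (nmD _ _) _.
have := H1 _ k1; have := H2 _ k2; lra.
Qed.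

Lemma t0M c u : t0 u -> t0 (fun k => c * u k).
Proof.
move=> hu e e0; have c0 := nm_ge0 c.
have e2 : 0 < e / (nm c + 1) by rewrite divr_gt0 // ltr_wpDl.
have [K HK] := hu _ e2; exists K => k /HK h.
have h2 : nm c * (e / (nm c + 1)) < e.
  by rewrite mulrA ltr_pdivrMr ?ltr_wpDl //; nra.
rewrite nmM; apply: le_lt_trans h2; rewrite ler_wpM2l // ltW //.
Qed.

Lemma t0N u : t0 u -> t0 (fun k => - u k).
Proof. by move=> h; apply: (t0_ext (w := fun k => (-1) * u k)) (t0M _ h) => k; rewrite mulN1r. Qed.

Lemma t0B u w : t0 u -> t0 w -> t0 (fun k => u k - w k).
Proof. by move=> hu hw; apply: t0D hu (t0N hw). Qed.

Lemma t0S u : t0 u -> t0 (fun k => u k.+1).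
Proof. by move=> h e /h [K HK]; exists K => k hk; apply: HK; apply: leq_trans hk _. Qed.

Lemma t0_sum (I : Type) (r : seq I) (P : pred I) (F : I -> nat -> C) :
  (forall i, t0 (F i)) -> t0 (fun k => \sum_(i <- r | P i) F i k).
Proof.
move=> h; elim: r => [|i r IH].
  by apply: t0_ext t0_0 => k; rewrite big_nil.
case Pi: (P i).
  by apply: t0_ext (t0D (h i) IH) => k; rewrite big_cons Pi.
by apply: t0_ext IH => k; rewrite big_cons Pi.
Qed.

Lemma geom_small (r c e : R) : 0 <= r -> r < 1 -> 0 <= c -> 0 < e ->
  exists J, r ^+ J * c < e.
Proof.
move=> r0 r1 c0 e0.
have : (fun J => r ^+ J) @ \oo --> (0 : R).
  by apply: cvg_expr; rewrite ger0_norm.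
move=> /cvgrPdist_lt /(_ (e / (c + 1))).
rewrite divr_gt0 ?ltr_wpDl // => /(_ isT) [J _ HJ].
exists J; have := HJ J (leqnn J); rewrite sub0r normrN ger0_norm ?exprn_ge0 //.
rewrite ltr_pdivlMr ?ltr_wpDl // => h.
have := exprn_ge0 J r0; nra.
Qed.

Lemma t0_rec (mu : C) (w v : nat -> C) : nm mu < 1 -> t0 v ->
  (forall k, w k.+1 = mu * w k + v k) -> t0 w.
Proof.
move=> mu1 hv rec e e0; set m := nm mu; have m0 : 0 <= m := nm_ge0 mu.
have e1 : 0 < e * (1 - m) / 2 by rewrite divr_gt0 // mulr_gt0 // subr_gt0.
have [K0 HK0] := hv _ e1; set c := nm (w K0); have c0 : 0 <= c := nm_ge0 _.
have claim : forall j, nm (w (K0 + j)%N) <= m ^+ j * c + e / 2.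
  elim=> [|j IH]; first by rewrite addn0 expr0 mul1r /c; lra.
  rewrite addnS rec; apply: le_trans (nmD _ _) _.
  have := HK0 (K0 + j)%N (leq_addr _ _); rewrite nmM -/m => hvj.
  have := ler_wpM2l m0 IH; rewrite exprS; nra.
have e2 : 0 < e / 2 by rewrite divr_gt0.
have [J HJ] := geom_small m0 mu1 c0 e2.
exists (K0 + J)%N => k hk; rewrite -(subnKC (leq_trans (leq_addr _ _) hk)).
apply: le_lt_trans (claim _) _.
have : m ^+ (k - K0) <= m ^+ J.
  apply: ler_wiXn2l => //; first exact: ltW.
  by rewrite leq_subRL // (leq_trans (leq_addr _ _) hk).
have := exprn_ge0 (k - K0) m0; nra.
Qed.
End S2.

Section S3.
Variable R : realType.
Local Notation C := (R[i]).
Definition T0 m n (U : nat -> 'M[C]_(m, n)) := forall i j, t0 (fun k => U k i j).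

Lemma T0_0 m n : T0 (fun=> (0 : 'M[C]_(m, n))).
Proof. by move=> i j; apply: t0_ext (@t0_0 R) => k; rewrite mxE. Qed.
Lemma T0_ext m n (U W : nat -> 'M[C]_(m, n)) : (forall k, U k = W k) -> T0 W -> T0 U.
Proof. by move=> E h i j; apply: t0_ext (h i j) => k; rewrite E. Qed.
Lemma T0D m n (U W : nat -> 'M[C]_(m, n)) : T0 U -> T0 W -> T0 (fun k => U k + W k).
Proof. by move=> hu hw i j; apply: t0_ext (t0D (hu i j) (hw i j)) => k; rewrite mxE. Qed.
Lemma T0N m n (U : nat -> 'M[C]_(m, n)) : T0 U -> T0 (fun k => - U k).
Proof. by move=> hu i j; apply: t0_ext (t0N (hu i j)) => k; rewrite mxE. Qed.
Lemma T0B m n (U W : nat -> 'M[C]_(m, n)) : T0 U -> T0 W -> T0 (fun k => U k - W k).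
Proof. by move=> hu hw; apply: T0D hu (T0N hw). Qed.
Lemma T0Z m n c (U : nat -> 'M[C]_(m, n)) : T0 U -> T0 (fun k => c *: U k).
Proof. by move=> hu i j; apply: t0_ext (t0M c (hu i j)) => k; rewrite mxE. Qed.
Lemma T0S m n (U : nat -> 'M[C]_(m, n)) : T0 U -> T0 (fun k => U k.+1).
Proof. by move=> hu i j; apply: t0S (hu i j). Qed.
Lemma T0_mull m n q (M : 'M[C]_(q, m)) (U : nat -> 'M[C]_(m, n)) :
  T0 U -> T0 (fun k => M *m U k).
Proof.
move=> hu i j; apply: (t0_ext (w := fun k => \sum_l M i l * U k l j)).
  by move=> k; rewrite mxE.
by apply: t0_sum => l; apply: t0M.
Qed.
Lemma T0_mulr m n q (M : 'M[C]_(n, q)) (U : nat -> 'M[C]_(m, n)) :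
  T0 U -> T0 (fun k => U k *m M).
Proof.
move=> hu i j; apply: (t0_ext (w := fun k => \sum_l M l j * U k i l)).
  by move=> k; rewrite mxE; apply: eq_bigr => l _; rewrite mulrC.
by apply: t0_sum => l; apply: t0M.
Qed.
Lemma T0_rec m n (mu : C) (W V : nat -> 'M[C]_(m, n)) : nm mu < 1 -> T0 V ->
  (forall k, W k.+1 = mu *: W k + V k) -> T0 W.
Proof.
move=> mu1 hv rec i j; apply: (t0_rec mu1 (hv i j)) => k.
by rewrite rec !mxE.
Qed.

Lemma schur_T0 n p (M : 'M[C]_n.+1) : (forall l, eigenvalue M l -> nm l < 1) ->
  forall Z V : nat -> 'M[C]_(n.+1, p), (forall k, Z k.+1 = M *m Z k + V k) ->
  T0 V -> T0 Z.
Proof.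
move=> hM.
have [s Hs] := closed_field_poly_normal (char_poly M).
rewrite (monicP (char_poly_monic M)) scale1r in Hs.
have rts : forall z, z \in s -> nm z < 1.
  by move=> z zs; apply: hM; rewrite eigenvalue_root_char Hs root_prod_XsubC.
have CH : \prod_(z <- s) (M - z%:M) = 0.
  have := Cayley_Hamilton M; rewrite Hs rmorph_prod => <-.
  by apply: eq_bigr => z _; rewrite rmorphB /= horner_mx_X horner_mx_C.
suff claim : forall t : seq C, {subset t <= s} -> forall Z V : nat -> 'M[C]_(n.+1, p),
    (forall k, Z k.+1 = M *m Z k + V k) -> T0 V ->
    T0 (fun k => (\prod_(z <- t) (M - z%:M)) *m Z k) -> T0 Z.
  move=> Z V rec hV; apply: (claim s (fun _ h => h) Z V rec hV).
  by apply: T0_ext (@T0_0 _ _) => k; rewrite CH mul0mx.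
elim/last_ind => [|t z IH] sub Z V rec hV hP.
  by apply: T0_ext hP => k; rewrite big_nil mul1mx.
pose W k := (M - z%:M) *m Z k.
have recW : forall k, W k.+1 = M *m W k + (M - z%:M) *m V k.
  move=> k; rewrite /W rec mulmxDr !mulmxA mulmxBl mulmxBr mul_scalar_mx.
  by rewrite mul_mx_scalar.
have hW : T0 W.
  apply: (IH _ W _ recW (T0_mull _ hV)).
    by move=> y yt; apply: sub; rewrite mem_rcons inE yt orbT.
  apply: T0_ext hP => k; rewrite big_rcons /= /W mulmxA //.
have zs : z \in s by apply: sub; rewrite mem_rcons inE eqxx.
apply: (T0_rec (rts z zs) (T0D hW hV)) => k.
rewrite rec /W mulmxBl mul_scalar_mx addrA; congr (_ + _).
by rewrite addrC subrK.
Qed.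
End S3.

Section S4.
Variable R : realType.
Variable N' : nat.
Local Notation N := N'.+1.
Variable a : 'M[R]_N.
Hypothesis adj : adjacency a.
Local Notation D := (Dmat a).

Lemma exists_max (f : 'I_N -> R) : exists i, forall j, f j <= f i.
Proof.
case: (@arg_maxP _ _ _ ord0 xpredT f isT) => i _ Hi.
by exists i => j; apply: Hi.
Qed.

Lemma din_ge0 i : 0 <= din a i.
Proof. by rewrite /din sumr_ge0 // => j _; case: adj. Qed.

Lemma s_gt0 i : 0 < 1 + din a i.
Proof. by rewrite ltr_pwDl ?din_ge0. Qed.

Lemma DE i j : D i j = ((i == j)%:R + a i j) / (1 + din a i).
Proof.
rewrite /Dmat mxE; case: eqP => [->|_]; first by case: adj => _ ->; rewrite addr0 div1r.
by rewrite add0r.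
Qed.

Lemma D_ge0 i j : 0 <= D i j.
Proof.
have s0 := ltW (s_gt0 i); have a0 : 0 <= a i j by case: adj.
by rewrite DE divr_ge0 // addr_ge0.
Qed.

Lemma D_rowsum i : \sum_j D i j = 1.
Proof.
under eq_bigr do rewrite DE.
rewrite -mulr_suml big_split /= -/(din a i).
rewrite (bigD1 i) //= eqxx big1 ?addr0; last by move=> j /negbTE; rewrite eq_sym => ->.
by rewrite divff // gt_eqF // s_gt0.
Qed.

Lemma D_pos i j : 0 < a i j -> 0 < D i j.
Proof.
move=> h; rewrite DE divr_gt0 ?s_gt0 //; apply: ltr_wpDl => //; exact: ler0n.
Qed.

Lemma max_spread (f : 'I_N -> R) i : (forall j, f j <= f i) ->
  \sum_j D i j * f j = f i -> forall j, 0 < D i j -> f j = f i.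
Proof.
move=> Hmax Hs j Dj.
have H0 : \sum_j0 D i j0 * (f i - f j0) = 0.
  under eq_bigr do rewrite mulrBr.
  by rewrite sumrB -mulr_suml D_rowsum mul1r Hs subrr.
have Hnn : forall k, xpredT k -> 0 <= D i k * (f i - f k).
  by move=> k _; rewrite mulr_ge0 ?D_ge0 // subr_ge0.
have := @psumr_eq0P _ _ xpredT (fun j0 => D i j0 * (f i - f j0)) Hnn H0 j isT.
by move=> /eqP; rewrite mulf_eq0 (gt_eqF Dj) /= subr_eq0 => /eqP <-.
Qed.

Hypothesis tree : has_spanning_tree a.

Lemma max_root (r : 'I_N) (par : 'I_N -> 'I_N) :
  (forall i, i != r -> 0 < a i (par i)) -> (forall i, exists k, iter k par i = r) ->
  forall (f : 'I_N -> R), (forall i, \sum_j D i j * f j = f i) ->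
  forall i, f i <= f r.
Proof.
move=> Hpar Hreach f Hf.
have [im Him] := exists_max f.
suff -> : f r = f im by [].
have step : forall k, f (iter k par im) = f im \/ f r = f im.
  elim=> [|k [IH|IH]]; [by left | | by right].
  have [E|ne] := eqVneq (iter k par im) r; first by right; rewrite -E.
  left; rewrite iterS; have := Hpar _ ne => /D_pos hD.
  rewrite -IH; apply: (max_spread _ (Hf _) hD) => j; rewrite IH; exact: Him.
have [k Hk] := Hreach im.
by case: (step k) => //; rewrite Hk.
Qed.

Lemma harmonic_const (f : 'I_N -> R) : (forall i, \sum_j D i j * f j = f i) ->
  forall i j, f i = f j.
Proof.
move=> Hf; have [r [par [Hpar Hreach]]] := tree.
have Hf' : forall i, \sum_j D i j * (- f j) = - f i.
  by move=> i; under eq_bigr do rewrite mulrN; rewrite sumrN Hf.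
have H1 := max_root Hpar Hreach Hf; have H2 := max_root Hpar Hreach Hf'.
have E : forall i, f i = f r.
  by move=> i; apply/eqP; rewrite eq_le H1 /= -lerN2 H2.
by move=> i j; rewrite !E.
Qed.

Lemma drift0 (f : 'I_N -> R) c : (forall i, \sum_j D i j * f j = f i - c) -> c = 0.
Proof.
move=> Hf.
have key : forall g d, (forall i, \sum_j D i j * g j = g i - d) -> 0 <= d.
  move=> g d Hg; have [im Him] := exists_max g.
  have : \sum_j D im j * g j <= \sum_j D im j * g im.
    by apply: ler_sum => j _; rewrite ler_wpM2l ?D_ge0.
  rewrite -mulr_suml D_rowsum mul1r Hg; lra.
have c1 := key _ _ Hf.
have c2 : 0 <= - c.
  apply: (key (fun j => - f j)) => i.
  rewrite (eq_bigr (fun j => - (D i j * f j))); last by move=> j _; rewrite mulrN.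
  rewrite sumrN Hf; lra.
lra.
Qed.
End S4.

Section S5.
Variable R : realType.
Local Notation C := (R[i]).
Variable N' : nat.
Local Notation N := N'.+1.
Variable a : 'M[R]_N.
Hypothesis adj : adjacency a.
Hypothesis tree : has_spanning_tree a.
Local Notation D := (Dmat a).
Local Notation Dt := ((cmx D)^T).
Local Notation cRe := complex.Re.
Local Notation cIm := complex.Im.

Lemma ReD (x y : C) : cRe (x + y) = cRe x + cRe y. Proof. by case: x => ? ?; case: y => ? ?. Qed.
Lemma ImD (x y : C) : cIm (x + y) = cIm x + cIm y. Proof. by case: x => ? ?; case: y => ? ?. Qed.
Lemma ReB (x y : C) : cRe (x - y) = cRe x - cRe y. Proof. by case: x => ? ?; case: y => ? ?. Qed.
Lemma ImB (x y : C) : cIm (x - y) = cIm x - cIm y. Proof. by case: x => ? ?; case: y => ? ?. Qed.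
Lemma Re_sum (I : Type) (r : seq I) (P : pred I) (F : I -> C) :
  cRe (\sum_(i <- r | P i) F i) = \sum_(i <- r | P i) cRe (F i).
Proof.
elim: r => [|x r IH]; first by rewrite !big_nil.
by rewrite !big_cons; case: (P x) => //; rewrite ReD IH.
Qed.
Lemma Im_sum (I : Type) (r : seq I) (P : pred I) (F : I -> C) :
  cIm (\sum_(i <- r | P i) F i) = \sum_(i <- r | P i) cIm (F i).
Proof.
elim: r => [|x r IH]; first by rewrite !big_nil.
by rewrite !big_cons; case: (P x) => //; rewrite ImD IH.
Qed.
Lemma ReM_real (x : R) (z : C) : cRe (x%:C * z) = x * cRe z.
Proof. by case: z => u v /=; rewrite mul0r subr0. Qed.
Lemma ImM_real (x : R) (z : C) : cIm (x%:C * z) = x * cIm z.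
Proof. by case: z => u v /=; rewrite mul0r addr0. Qed.

Lemma rowD (u : 'rV[C]_N) j : (u *m Dt) 0 j = \sum_i (D j i)%:C * u 0 i.
Proof. by rewrite mxE; apply: eq_bigr => i _; rewrite !mxE mulrC. Qed.

Lemma harm_Re (w : 'rV[C]_N) c : (forall j, (w *m Dt) 0 j = w 0 j - c) ->
  forall j, \sum_i D j i * cRe (w 0 i) = cRe (w 0 j) - cRe c.
Proof.
move=> h j; have := congr1 (@complex.Re R) (h j); rewrite rowD Re_sum ReB => <-; apply: eq_bigr => i _; by rewrite ReM_real.
Qed.
Lemma harm_Im (w : 'rV[C]_N) c : (forall j, (w *m Dt) 0 j = w 0 j - c) ->
  forall j, \sum_i D j i * cIm (w 0 i) = cIm (w 0 j) - cIm c.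
Proof.
move=> h j; have := congr1 (@complex.Im R) (h j); rewrite rowD Im_sum ImB => <-; apply: eq_bigr => i _; by rewrite ImM_real.
Qed.

Lemma cz0 (z : C) : cRe z = 0 -> cIm z = 0 -> z = 0.
Proof. by case: z => ? ? /= -> ->. Qed.

Lemma gen1 (u : 'rV[C]_N) : u *m (1 - Dt) *m (1 - Dt) = 0 -> u *m (1 - Dt) = 0.
Proof.
set w := u *m (1 - Dt) => Hw.
have hw : forall j, (w *m Dt) 0 j = w 0 j - 0.
  have E : w *m Dt = w.
    by move: Hw; rewrite mulmxBr mulmx1 => /eqP; rewrite subr_eq0 => /eqP.
  by move=> j; rewrite subr0 E.
have cR : forall i j, cRe (w 0 i) = cRe (w 0 j).
  by apply: (harmonic_const adj tree) => j; rewrite (harm_Re hw) subr0.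
have cI : forall i j, cIm (w 0 i) = cIm (w 0 j).
  by apply: (harmonic_const adj tree) => j; rewrite (harm_Im hw) subr0.
set c := w 0 ord0.
have wc : forall j, w 0 j = c.
  move=> j; have := cR j ord0; have := cI j ord0; rewrite /c.
  by case: (w 0 j) => ? ?; case: (w 0 ord0) => ? ? /= -> ->.
have hu : forall j, (u *m Dt) 0 j = u 0 j - c.
  move=> j; rewrite -(wc j) /w mulmxBr mulmx1 !mxE.
  by set t := (\sum_j0 _); ring.
have r0 := drift0 adj (harm_Re hu); have i0 := drift0 adj (harm_Im hu).
have c0 : c = 0 by apply: cz0.
by apply/matrixP => i j; rewrite (ord1 i) wc c0 mxE.
Qed.

Lemma nm_sum (I : Type) (r : seq I) (P : pred I) (F : I -> C) :
  nm (\sum_(i <- r | P i) F i) <= \sum_(i <- r | P i) nm (F i).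
Proof.
elim: r => [|x r IH]; first by rewrite !big_nil nm0.
rewrite !big_cons; case: (P x) => //.
by apply: le_trans (nmD _ _) _; rewrite lerD2l.
Qed.

Lemma eigD (l : C) : eigenvalue Dt l -> l = 1 \/ nm l < 1.
Proof.
move=> /eigenvalueP [v Hv vn0].
pose g i := v 0 i.
have he : forall j, \sum_i (D j i)%:C * g i = l * g j.
  by move=> j; rewrite -rowD Hv mxE.
have [jm Hjm] := exists_max (fun j => nm (g j)).
set M := nm (g jm).
have M0 : 0 < M.
  rewrite lt_def nm_ge0 andbT; apply/eqP => M0; apply/negP: vn0; rewrite negbK.
  apply/eqP/matrixP => i j; rewrite (ord1 i) mxE; apply: nm_eq0.
  by apply/eqP; rewrite eq_le nm_ge0 andbT -M0 Hjm.
set d := D jm jm.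
have d0 : 0 < d.
  rewrite /d (DE adj); have -> : (jm == jm) = true by apply/eqP.
  case: adj => _ ->; rewrite addr0 div1r invr_gt0.
  exact: (s_gt0 adj jm).
have rs : \sum_(i | i != jm) D jm i = 1 - d.
  by have := D_rowsum adj jm; rewrite (bigD1 jm) //= => <-; rewrite addrC addrK.
have d1 : d <= 1.
  have : 0 <= \sum_(i | i != jm) D jm i by apply: sumr_ge0 => i _; exact: (D_ge0 adj).
  rewrite rs; lra.
have key : (l - d%:C) * g jm = \sum_(i | i != jm) (D jm i)%:C * g i.
  have := he jm; rewrite (bigD1 jm) //= => E.
  by rewrite mulrBl -E; set t := (\sum_(i | _) _); ring.
have bound : nm ((l - d%:C) * g jm) <= (1 - d) * M.
  rewrite key; apply: le_trans (nm_sum _ _ _) _.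
  rewrite -rs mulr_suml; apply: ler_sum => i _.
  by rewrite nmM nmR ger0_norm ?(D_ge0 adj) // ler_wpM2l ?(D_ge0 adj) // Hjm.
rewrite nmM -/M ler_pM2r // in bound.
move: bound {key he Hv}; case: l => x y; rewrite /nm /= => bound.
set q := Num.sqrt _ in bound; set q' := Num.sqrt _.
have hq : q ^+ 2 = (x - d) ^+ 2 + (y - 0) ^+ 2 by rewrite sqr_sqrtr // addr_ge0 // sqr_ge0.
have hq' : q' ^+ 2 = x ^+ 2 + y ^+ 2 by rewrite sqr_sqrtr // addr_ge0 // sqr_ge0.
have q0 : 0 <= q by exact: sqrtr_ge0.
have q'0 : 0 <= q' by exact: sqrtr_ge0.
case: (ltP q' 1) => [|q'1]; first by right.
left.
have h1 : (x - d) ^+ 2 + y ^+ 2 <= (1 - d) ^+ 2.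
  rewrite subr0 in hq; rewrite -hq; nra.
have h2 : 1 <= x ^+ 2 + y ^+ 2 by rewrite -hq'; nra.
have hx : 1 <= x by nra.
have hy : (x - 1) ^+ 2 + y ^+ 2 <= 0 by nra.
have ex : x = 1 by nra.
have ey : y = 0 by nra.
by rewrite ex ey.
Qed.
End S5.

Section S6.
Variable R : realType.
Local Notation C := (R[i]).

Lemma scale_eig n (A' : 'M[C]_n.+1) (z : C) :
  (forall l, eigenvalue A' l -> nm l <= 1) -> nm z < 1 ->
  forall l, eigenvalue (z *: A') l -> nm l < 1.
Proof.
move=> hA z1 l /eigenvalueP [v Hv vn0].
have [z0|zn0] := eqVneq z 0.
  move: Hv; rewrite z0 scale0r mulmx0 => /esym /eqP; rewrite scalemx_eq0 (negbTE vn0) orbF.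
  by move=> /eqP ->; rewrite nm0.
have : eigenvalue A' (l / z).
  apply/eigenvalueP; exists v => //.
  apply: (scalerI zn0); rewrite scalemxAr Hv scalerA mulrC divfK //.
move=> /hA h.
have -> : l = z * (l / z) by rewrite mulrC divfK.
rewrite nmM; have := nm_ge0 z; have := nm_ge0 (l / z); nra.
Qed.

Lemma xi_T0 n N' (A' : 'M[C]_n.+1) (Dt : 'M[C]_N'.+1) :
  (forall l, eigenvalue A' l -> nm l <= 1) ->
  forall t : seq C, (forall z, z \in t -> nm z < 1) ->
  forall xi V : nat -> 'M[C]_(n.+1, N'.+1),
  (forall k, xi k.+1 = A' *m xi k *m Dt + V k) -> T0 V ->
  T0 (fun k => xi k *m \prod_(z <- t) (Dt - z%:M)) -> T0 xi.
Proof.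
move=> hA; elim=> [|z t IH] ht xi V rec hV hP.
  by apply: T0_ext hP => k; rewrite big_nil mulmx1.
pose W k := xi k *m (Dt - z%:M).
have comm : Dt *m (Dt - z%:M) = (Dt - z%:M) *m Dt.
  by rewrite mulmxBr mulmxBl mul_mx_scalar mul_scalar_mx.
have recW : forall k, W k.+1 = A' *m W k *m Dt + V k *m (Dt - z%:M).
  move=> k; rewrite /W rec mulmxDl; congr (_ + _).
  by rewrite -!mulmxA comm.
have hW : T0 W.
  apply: (IH _ W _ recW (T0_mulr _ hV)).
    by move=> y yt; apply: ht; rewrite inE yt orbT.
  by apply: T0_ext hP => k; rewrite big_cons /W mulmxA.
have z1 : nm z < 1 by apply: ht; rewrite inE eqxx.
apply: (schur_T0 (scale_eig hA z1) _ (T0D (T0_mull A' hW) hV)) => k.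
rewrite rec /W mulmxA mulmxBr mul_mx_scalar -scalemxAl.
by rewrite addrA; congr (_ + _); rewrite addrC subrK.
Qed.
End S6.

Section S7.
Variable R : realType.
Local Notation C := (R[i]).
Variable N' : nat.
Local Notation N := N'.+1.
Variable a : 'M[R]_N.
Hypothesis adj : adjacency a.
Hypothesis tree : has_spanning_tree a.
Local Notation D := (Dmat a).
Local Notation Dt := ((cmx D)^T).

Lemma Dpoly : exists t : seq C, (forall z, z \in t -> nm z < 1) /\
  (1 - Dt) *m \prod_(z <- t) (Dt - z%:M) = 0.
Proof.
have [s Hs] := closed_field_poly_normal (char_poly Dt).
rewrite (monicP (char_poly_monic Dt)) scale1r in Hs.
exists [seq z <- s | z != 1]; split.
  move=> z; rewrite mem_filter => /andP [z1 zs].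
  have : eigenvalue Dt z by rewrite eigenvalue_root_char Hs root_prod_XsubC.
  by move=> /(eigD adj) [/eqP|//]; rewrite (negbTE z1).
have CH := Cayley_Hamilton Dt.
rewrite Hs (bigID (fun z => z != 1)) /= rmorphM /= !rmorph_prod /= in CH.
set P := \prod_(z <- s | z != 1) _ in CH.
set Q := \prod_(z <- s | ~~ (z != 1)) _ in CH.
have hP : P = \prod_(z <- [seq z <- s | z != 1]) (Dt - z%:M).
  by rewrite big_filter; apply: eq_bigr => z _; rewrite rmorphB /= horner_mx_X horner_mx_C.
have hQ : Q = \prod_(z <- [seq z <- s | ~~ (z != 1)]) (Dt - z%:M).
  by rewrite big_filter; apply: eq_bigr => z _; rewrite rmorphB /= horner_mx_X horner_mx_C.
have claim : forall r : seq C, (forall z, z \in r -> z = 1) -> forall u : 'rV[C]_N,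
    u *m \prod_(z <- r) (Dt - z%:M) = 0 -> u *m (1 - Dt) = 0.
  elim=> [|z r IH] hr u.
    by rewrite big_nil mulmx1 => ->; rewrite mul0mx.
  rewrite big_cons (hr z (mem_head _ _)) mulmxA => /IH h.
  have hr2 : forall y, y \in r -> y = 1 by move=> y yr; apply: hr; rewrite inE yr orbT.
  have {}h := h hr2.
  apply: (gen1 adj tree); move: h.
  have -> : 1 - Dt = - (Dt - 1%:M) by rewrite opprB.
  rewrite !mulmxN !mulNmx opprK => /eqP; rewrite oppr_eq0 => /eqP //.
have CH' : P *m Q = 0 := CH.
have rows : forall i, row i P *m (1 - Dt) = 0.
  move=> i; apply: (claim [seq z <- s | ~~ (z != 1)] _ (row i P)); last by rewrite -hQ -row_mul CH' row0.
  by move=> z; rewrite mem_filter => /andP [/negPn /eqP].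
have PL : P *m (1 - Dt) = 0 by apply/row_matrixP => i; rewrite row_mul rows row0.
rewrite -hP.
have cm : GRing.comm (1 - Dt) P.
  have -> : 1 - Dt = horner_mx Dt (1 - 'X).
    by rewrite rmorphB /= rmorph1 horner_mx_X.
  rewrite /P -rmorph_prod; exact: comm_horner_mx2.
have cm2 : (1 - Dt) *m P = P *m (1 - Dt) := cm.
by rewrite cm2 PL.
Qed.
End S7.

Section S8.
Variable R : realType.
Local Notation C := (R[i]).

Lemma core n' N' (Ac BK HC : 'M[C]_n'.+1) (Dt : 'M[C]_N'.+1) (t : seq C) :
  (forall l, eigenvalue Ac l -> nm l <= 1) ->
  (forall l, eigenvalue (Ac - BK) l -> nm l < 1) ->
  (forall l, eigenvalue (Ac - HC) l -> nm l < 1) ->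
  (forall z, z \in t -> nm z < 1) ->
  (1 - Dt) *m \prod_(z <- t) (Dt - z%:M) = 0 ->
  forall X E Xh : nat -> 'M[C]_(n'.+1, N'.+1),
  (forall k, X k.+1 = Ac *m X k - BK *m E k) ->
  (forall k, E k.+1 = Ac *m E k - BK *m E k + Ac *m Xh k - Ac *m (E k *m (1 - Dt))) ->
  (forall k, Xh k.+1 = Ac *m Xh k - BK *m (E k *m (1 - Dt)) + HC *m (X k *m (1 - Dt))
                        - HC *m Xh k) ->
  T0 (fun k => X k *m (1 - Dt)).
Proof.
move=> hA hBK hHC ht hP X E Xh recX recE recXh.
pose e k := X k *m (1 - Dt) - Xh k.
have rec_e : forall k, e k.+1 = (Ac - HC) *m e k + 0.
  move=> k; rewrite /e recX recXh addr0; move: (1 - Dt) => L.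
  rewrite ?mulmxBl ?mulmxDl ?mulmxBl ?mulmxDl ?mulmxBr ?mulmxDr -?mulmxA.
  move: (Ac *m (X k *m L)) (BK *m (E k *m L)) (Ac *m Xh k) => a1 a2 a3.
  move: (HC *m (X k *m L)) (HC *m Xh k) => a4 a5.
  apply/matrixP => i j; rewrite !mxE; ring.
have Te : T0 e := schur_T0 hHC rec_e (@T0_0 _ _ _).
pose xi k := X k *m (1 - Dt) - E k *m (1 - Dt).
have hD : forall M : 'M[C]_(n'.+1, N'.+1), M *m Dt = M - M *m (1 - Dt).
  by move=> M; rewrite mulmxBr mulmx1 opprB addrC subrK.
have rec_xi : forall k, xi k.+1 = Ac *m xi k *m Dt + Ac *m e k *m (1 - Dt).
  move=> k; rewrite hD /xi /e recX recE; move: (1 - Dt) => L.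
  rewrite ?mulmxBl ?mulmxDl ?mulmxBl ?mulmxDl ?mulmxBr ?mulmxDr -?mulmxA.
  rewrite ?mulmxBl ?mulmxDl ?mulNmx ?mulmxN -?mulmxA.
  move: (Ac *m (X k *m (L *m L))) (Ac *m (E k *m (L *m L))) (Ac *m (Xh k *m L)) => a1 a2 a3.
  move: (Ac *m (X k *m L)) (BK *m (E k *m L)) (Ac *m (E k *m L)) (BK *m E k) => a4 a5 a6 a7.
  apply/matrixP => i j; rewrite !mxE; ring.
have Txi : T0 xi.
  apply: (xi_T0 hA ht rec_xi (T0_mulr _ (T0_mull _ Te))).
  by apply: T0_ext (@T0_0 _ _ _) => k; rewrite /xi -mulmxBl -mulmxA hP mulmx0.
have rec_b : forall k, X k.+1 *m (1 - Dt) = (Ac - BK) *m (X k *m (1 - Dt)) + BK *m xi k.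
  move=> k; rewrite /xi recX; move: (1 - Dt) => L.
  rewrite ?mulmxBl ?mulmxDl ?mulmxBr ?mulmxDr -?mulmxA.
  move: (Ac *m (X k *m L)) (BK *m (E k *m L)) (BK *m (X k *m L)) => a1 a2 a3.
  apply/matrixP => i j; rewrite !mxE; ring.
exact: (schur_T0 (Z := fun k => X k *m (1 - Dt)) hBK rec_b (T0_mull _ Txi)).
Qed.
End S8.

Lemma T0_cvg (R : realType) n (v : nat -> 'cV[R]_n) :
  T0 (fun k => map_mx (real_complex R) (v k)) -> v @ \oo --> (0 : 'cV[R]_n).
Proof.
move=> hT; apply/cvgrPdist_lt => e e0.
have H : forall ij : 'I_n * 'I_1, exists K, forall k, (K <= k)%N -> `|v k ij.1 ij.2| < e.
  move=> [r c]; have [K HK] := hT r c e e0; exists K => k /HK.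
  by rewrite mxE nmR.
have [f Hf] := fin_all_exists H.
exists (\max_ij f ij) => // k /= hk.
rewrite sub0r normrN.
change (mx_norm (v k) < e).
have [->|nz] := eqVneq (mx_norm (v k)) 0; first by [].
have [ij ->] := mx_norm_neq0 nz.
apply: Hf; apply: leq_trans hk; exact: leq_bigmax.
Qed.

Section S9.
Variable R : realType.
Variable N' : nat.
Local Notation N := N'.+1.
Variable a : 'M[R]_N.
Hypothesis adj : adjacency a.
Hypothesis tree : has_spanning_tree a.
Local Notation D := (Dmat a).

Lemma kerL (i j : 'I_N) : exists g : 'cV[R]_N,
  delta_mx i 0 - delta_mx j 0 = (1 - D)^T *m g.
Proof.
set L := 1 - D.
have hc : forall k l l', cokermx L l k = cokermx L l' k.
  move=> k; apply: (harmonic_const adj tree) => l.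
  have := mulmx_coker L; rewrite /L mulmxBl mul1mx => /eqP; rewrite subr_eq0 => /eqP E.
  by rewrite [in RHS]E mxE.
have : ((delta_mx 0 i - delta_mx 0 j : 'rV[R]_N) <= L)%MS.
  rewrite submxE mulmxBl -!rowE; apply/eqP/matrixP => r k.
  by have := hc k i j; rewrite !mxE => ->; rewrite subrr.
move=> /submxP [g Hg]; exists g^T.
by rewrite -trmx_mul -Hg linearB /= !trmx_delta.
Qed.
End S9.

Section S10.
Variable R : realType.
Local Notation C := (R[i]).
Local Notation rc := (real_complex R).
Definition mk n N (f : 'I_N -> 'cV[R]_n) : 'M[C]_(n, N) := \matrix_(r, l) (f l r 0)%:C.

Lemma cmxE n (M : 'M[R]_n) : cmx M = map_mx rc M.
Proof. by []. Qed.

Lemma mk_ext n N (f g : 'I_N -> 'cV[R]_n) : (forall l, f l = g l) -> mk f = mk g.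
Proof. by move=> h; apply/matrixP => r l; rewrite !mxE h. Qed.
Lemma mkD n N (f g : 'I_N -> 'cV[R]_n) : mk (fun l => f l + g l) = mk f + mk g.
Proof. by apply/matrixP => r l; rewrite !mxE rmorphD. Qed.
Lemma mkB n N (f g : 'I_N -> 'cV[R]_n) : mk (fun l => f l - g l) = mk f - mk g.
Proof. by apply/matrixP => r l; rewrite !mxE rmorphB. Qed.
Lemma mkM q n N (M : 'M[R]_(q, n)) (f : 'I_N -> 'cV[R]_n) :
  mk (fun l => M *m f l) = map_mx rc M *m mk f.
Proof.
apply/matrixP => r l; rewrite !mxE rmorph_sum; apply: eq_bigr => s _.
by rewrite !mxE rmorphM.
Qed.
Lemma mkL n N' (Dm : 'M[R]_N'.+1) (f : 'I_N'.+1 -> 'cV[R]_n) :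
  (forall l, \sum_j Dm l j = 1) ->
  mk (fun l => \sum_j Dm l j *: (f l - f j)) = mk f *m (1 - (cmx Dm)^T).
Proof.
move=> rs; apply/matrixP => r l.
rewrite mulmxBr mulmx1 !mxE summxE.
have -> : \sum_j (Dm l j *: (f l - f j)) r 0 = f l r 0 - \sum_j Dm l j * f j r 0.
  under eq_bigr do rewrite !mxE mulrBr.
  by rewrite sumrB -mulr_suml rs mul1r.
rewrite rmorphB rmorph_sum; congr (_ - _); apply: eq_bigr => s _.
by rewrite !mxE rmorphM mulrC.
Qed.
Lemma mk_map n N (f : 'I_N -> 'cV[R]_n) : mk f = map_mx rc (\matrix_(r, l) f l r 0).
Proof. by apply/matrixP => r l; rewrite !mxE. Qed.
End S10.

Unset Implicit Arguments.
Local Close Scope complex_scope.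
Theorem theorem2 (R : realType) (n m p : nat)
  (A : 'M[R]_n) (B : 'M[R]_(n, m)) (C : 'M[R]_(p, n))
  (K : 'M[R]_(m, n)) (H : 'M[R]_(n, p)) :
  eigs_in_closed_unit_disc A ->
  stabilizable A B ->
  detectable C A ->
  schur_stable (A - B *m K) ->
  schur_stable (A - H *m C) ->
  forall (N : nat) (a : 'M[R]_N),
  (2 <= N)%N ->
  adjacency a ->
  has_spanning_tree a ->
  forall (x eta xhat : 'I_N -> nat -> 'cV[R]_n) (u : 'I_N -> nat -> 'cV[R]_m),
  let d := Dmat a in
  let y i k := C *m x i k in
  let zeta i k := \sum_(j < N) d i j *: (y i k - y j k) in
  let zetahat i k := \sum_(j < N) d i j *: (eta i k - eta j k) in
  (forall i k, x i k.+1 = A *m x i k + B *m u i k) ->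
  (forall i k, eta i k.+1 =
     A *m eta i k + B *m u i k + A *m xhat i k - A *m zetahat i k) ->
  (forall i k, xhat i k.+1 =
     A *m xhat i k - B *m K *m zetahat i k + H *m (zeta i k - C *m xhat i k)) ->
  (forall i k, u i k = - (K *m eta i k)) ->
  forall i j : 'I_N, (fun k => x i k - x j k) @ \oo --> (0 : 'cV[R]_n).
Proof.
move: A B C K H; case: n => [|n'] A B C K H hA _ _ hBK hHC N a.
  move=> _ _ _ x eta xhat u d y zeta zetahat _ _ _ _ i j.
  have -> : (fun k => x i k - x j k) = fun=> 0 by apply: funext => k; apply: flatmx0.
  exact: cvg_cst.
case: N a => [|N'] a //.
move=> _ adj tree x eta xhat u d y zeta zetahat hx heta hxh hu i j.
set rc := real_complex R.
set Dt := (cmx d)^T.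
have [t [ht hP]] := Dpoly adj tree.
have rs : forall l, \sum_j d l j = 1 := D_rowsum adj.
have hA' : forall l, eigenvalue (map_mx rc A) l -> nm l <= 1.
  by move=> l /hA; rewrite normC_nm (_ : 1 = real_complex R 1) // lecR.
have hBK' : forall l, eigenvalue (map_mx rc A - map_mx rc (B *m K)) l -> nm l < 1.
  by move=> l; rewrite -map_mxB => /hBK; rewrite normC_nm (_ : 1 = real_complex R 1) // ltcR.
have hHC' : forall l, eigenvalue (map_mx rc A - map_mx rc (H *m C)) l -> nm l < 1.
  by move=> l; rewrite -map_mxB => /hHC; rewrite normC_nm (_ : 1 = real_complex R 1) // ltcR.
pose X k := mk (fun l => x l k).
pose E k := mk (fun l => eta l k).
pose Xh k := mk (fun l => xhat l k).
have mzh : forall k, mk (fun l => zetahat l k) = E k *m (1 - Dt).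
  by move=> k; rewrite /zetahat mkL.
have mzx : forall k, mk (fun l => \sum_j d l j *: (x l k - x j k)) = X k *m (1 - Dt).
  by move=> k; rewrite mkL.
have zetaE : forall l k, zeta l k = C *m \sum_j d l j *: (x l k - x j k).
  move=> l k; rewrite /zeta mulmx_sumr; apply: eq_bigr => s _.
  by rewrite /y -mulmxBr scalemxAr.
have recX : forall k, X k.+1 = map_mx rc A *m X k - map_mx rc (B *m K) *m E k.
  move=> k; rewrite -!mkM -mkB; apply: mk_ext => l.
  by rewrite hx hu mulmxN mulmxA.
have recE : forall k, E k.+1 = map_mx rc A *m E k - map_mx rc (B *m K) *m E k
    + map_mx rc A *m Xh k - map_mx rc A *m (E k *m (1 - Dt)).
  move=> k; rewrite -mzh -!mkM -mkB -mkD -mkB; apply: mk_ext => l.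
  by rewrite heta hu mulmxN mulmxA.
have recXh : forall k, Xh k.+1 = map_mx rc A *m Xh k
    - map_mx rc (B *m K) *m (E k *m (1 - Dt))
    + map_mx rc (H *m C) *m (X k *m (1 - Dt)) - map_mx rc (H *m C) *m Xh k.
  move=> k; rewrite -mzh -mzx -!mkM -mkB -mkD -mkB; apply: mk_ext => l.
  by rewrite hxh zetaE mulmxBr !mulmxA addrA.
have T := core hA' hBK' hHC' ht hP recX recE recXh.
have [g Hg] := kerL adj tree i j.
apply: T0_cvg.
apply: (T0_ext _ (T0_mulr (map_mx rc g) T)) => k.
pose Xr := \matrix_(r, l) x l k r 0 : 'M[R]_(n'.+1, N'.+1).
have col : x i k - x j k = Xr *m (delta_mx i 0 - delta_mx j 0).
  rewrite mulmxBr -!colE; apply/matrixP => r c; rewrite (ord1 c) !mxE.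
  done.
have L1 : map_mx rc ((1 - d)^T) = 1 - Dt.
  by rewrite -map_trmx map_mxB map_mx1 linearB /= trmx1.
by rewrite col Hg mulmxA !map_mxM L1 /X mk_map.
Qed.
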